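(* Let $m,n\ge1$ and $k$ be integers with $k^n\equiv1\pmod m$, let $G=\langle a,b\mid a^m=b^n=1,\ b^{-1}ab=a^k\rangle$, let $t=|k|_m$ and $n=rt$. Let $s$ be a prime with $\gcd(s,m)=1$, $\zeta$ a primitive $m$-th root of unity in $\overline{\mathbb{F}}_s$, and $q$ a power of $s$ with $q\equiv k^j\pmod m$ for some $j$. Assume $F=\mathbb{F}_q$ contains a primitive $r$-th root of unity $\eta$. Then for every integer $c$, the $t$-dimensional representation of $G$ over $\overline{\mathbb{F}}_s$ given by $$a\mapsto\mathrm{diag}(\zeta,\zeta^k,\dots,\zeta^{k^{t-1}}),$$ $$b\mapsto\text{the } t\times t \text{ matrix with entries } 1 \text{ in positions } (i+1,i) \ (1\le i\le t-1),\ \eta^c \text{ in position } (1,t),\ 0 \text{ elsewhere},$$ is realizable over $F$.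
   Context: $|k|_m$ denotes the multiplicative order of $k$ modulo $m$. A representation over $\overline{\mathbb{F}}_s$ is realizable over $\mathbb{F}_q$ if it is equivalent (over $\overline{\mathbb{F}}_s$) to a matrix representation with all matrix entries in $\mathbb{F}_q$. *)

(* Defs.v *)
From HB Require Import structures.
From mathcomp Require Import all_boot all_order all_algebra all_field.
Set Implicit Arguments. Unset Strict Implicit. Unset Printing Implicit Defensive.
Import Order.TTheory GRing.Theory Num.Theory.
Local Open Scope ring_scope.

Definition is_mult_order (k : int) (m t : nat) : Prop :=
  (0 < t)%N /\ (k ^+ t == 1 %[mod m%:Z])%Z /\
  (forall u : nat, (0 < u < t)%N -> ~~ (k ^+ u == 1 %[mod m%:Z])%Z).

(* Natural power of a square matrix (without needing a ring structure on 'M_t). *)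
Definition mxpow (R : pzRingType) (t : nat) (A : 'M[R]_t) (e : nat) : 'M[R]_t :=
  iter e (mulmx A) 1%:M.

Definition mxpowz (R : fieldType) (t : nat) (A : 'M[R]_t) (z : int) : 'M[R]_t :=
  match z with
  | Posz e => mxpow A e
  | Negz e => mxpow (invmx A) e.+1
  end.

Definition in_Fq (L : fieldType) (q : nat) (x : L) : bool := x ^+ q == x.

Definition realizable2 (L : fieldType) (q t : nat) (A B : 'M[L]_t) : Prop :=
  exists P : 'M[L]_t, P \in unitmx /\
    (forall i j, in_Fq q ((invmx P *m A *m P) i j)) /\
    (forall i j, in_Fq q ((invmx P *m B *m P) i j)).

Definition rep_a (L : fieldType) (t : nat) (zeta : L) (k : int) : 'M[L]_t :=
  \matrix_(i < t, j < t) (if i == j then zeta ^ (k ^+ (i : nat)) else 0).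

Definition rep_b (L : fieldType) (t : nat) (eta : L) (c : int) : 'M[L]_t :=
  \matrix_(i < t, j < t)
    (if (i : nat) == (j : nat).+1 then 1
     else if ((i : nat) == 0%N) && ((j : nat) == t.-1) then eta ^ c else 0).

(* Main.v *)
Require Import Defs.
From HB Require Import structures.
From mathcomp Require Import all_boot all_order all_algebra all_field.
From Stdlib Require Import Lia.
Import Order.TTheory GRing.Theory Num.Theory.
Local Open Scope ring_scope.
Set Implicit Arguments. Unset Strict Implicit. Unset Printing Implicit Defensive.

Definition frq (L : fieldType) (s : nat) (hs : s \in [pchar L]) (e : nat) (x : L) : L :=
  x ^+ (s ^ e)%N.

Lemma pnat_se (L : fieldType) (s : nat) (hs : s \in [pchar L]) (e : nat) :
  [pchar L].-nat (s ^ e)%N.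
Proof. by rewrite pnatX pnatE ?hs // (pcharf_prime hs). Qed.

Lemma frq_zmod L s hs e : zmod_morphism (@frq L s hs e).
Proof.
move=> x y; rewrite /frq exprDn_pchar ?pnat_se // exprNn_pchar ?pnat_se //.
Qed.

Lemma frq_monoid L s hs e : monoid_morphism (@frq L s hs e).
Proof. by split; rewrite /frq ?expr1n // => x y; rewrite exprMn. Qed.

HB.instance Definition _ (L : fieldType) (s : nat) (hs : s \in [pchar L]) (e : nat) :=
  GRing.isZmodMorphism.Build L L (@frq L s hs e) (@frq_zmod L s hs e).
HB.instance Definition _ (L : fieldType) (s : nat) (hs : s \in [pchar L]) (e : nat) :=
  GRing.isMonoidMorphism.Build L L (@frq L s hs e) (@frq_monoid L s hs e).


Section MxPow.
Variables (L : fieldType) (t : nat).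
Implicit Types (X Y : 'M[L]_t).

Lemma mxpowS X p : mxpow X p.+1 = X *m mxpow X p. Proof. by []. Qed.
Lemma mxpow0 X : mxpow X 0 = 1%:M. Proof. by []. Qed.
Lemma mxpowSr X p : mxpow X p.+1 = mxpow X p *m X.
Proof.
elim: p => [|p IH]; first by rewrite mxpowS mxpow0 mulmx1 mul1mx.
by rewrite [LHS]mxpowS {1}IH mulmxA -mxpowS.
Qed.
Lemma mxpowD X a b : mxpow X (a + b) = mxpow X a *m mxpow X b.
Proof.
elim: a => [|a IH]; first by rewrite add0n mxpow0 mul1mx.
by rewrite addSn !mxpowS IH mulmxA.
Qed.
Lemma mxpowM X a b : mxpow X (a * b) = mxpow (mxpow X a) b.
Proof.
elim: b => [|b IH]; first by rewrite muln0.
by rewrite mulnS mxpowD IH.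
Qed.
Lemma mxpow_scalar (a : L) p : mxpow (a%:M : 'M_t) p = (a ^+ p)%:M.
Proof.
elim: p => [|p IH]; first by rewrite expr0.
by rewrite mxpowS IH -scalar_mxM exprS.
Qed.
Lemma mxpow_diag (d : 'rV[L]_t) p :
  mxpow (diag_mx d) p = diag_mx (\row_i (d 0 i ^+ p)).
Proof.
elim: p => [|p IH].
  by apply/matrixP=> i j; rewrite !mxE expr0.
rewrite mxpowS IH mul_diag_mx; apply/matrixP=> i j; rewrite !mxE exprS.
by rewrite mulrnAr.
Qed.
Lemma mxpow_comm X p : X *m mxpow X p = mxpow X p *m X.
Proof. by rewrite -mxpowS mxpowSr. Qed.
Lemma mxpow_unit X p : X \in unitmx -> mxpow X p \in unitmx.
Proof.
move=> uX; elim: p => [|p IH]; first exact: unitmx1.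
by rewrite mxpowS unitmx_mul uX.
Qed.
Lemma map_mxpow (f : {rmorphism L -> L}) X p :
  map_mx f (mxpow X p) = mxpow (map_mx f X) p.
Proof.
elim: p => [|p IH]; first exact: map_mx1.
by rewrite !mxpowS map_mxM IH.
Qed.
Lemma invmx_diag (d : 'rV[L]_t) : (forall i, d 0 i != 0) ->
  invmx (diag_mx d) = diag_mx (\row_i (d 0 i)^-1).
Proof.
move=> nz.
have H : diag_mx d *m diag_mx (\row_i (d 0 i)^-1) = 1%:M.
  rewrite mul_diag_mx; apply/matrixP=> i j; rewrite !mxE.
  by rewrite mulrnAr mulfV.
have [ud _] := mulmx1_unit H.
by rewrite -[RHS](mulKmx ud) H mulmx1.
Qed.
Lemma mxpowz_diag (d : 'rV[L]_t) (z : int) : (forall i, d 0 i != 0) ->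
  mxpowz (diag_mx d) z = diag_mx (\row_i (d 0 i ^ z)).
Proof.
move=> nz; case: z => [e|e].
  rewrite [LHS]/mxpowz mxpow_diag; apply/matrixP=> i j; rewrite !mxE.
  by rewrite exprnP.
rewrite [LHS]/mxpowz invmx_diag // mxpow_diag; apply/matrixP=> i j; rewrite !mxE.
by rewrite exprVn NegzE.
Qed.
End MxPow.

Ltac nlia := rewrite -?subn1 -?plusE -?minusE -?multE; intros; lia.

Section Bmat.
Variables (L : fieldType) (t : nat) (ht0 : (0 < t)%N) (eta : L) (c : int).
Local Notation B := (rep_b t eta c).

Lemma Bpow_formula p : (p <= t)%N -> mxpow B p =
  \matrix_(i, j) (if (i : nat) == (j + p)%N then 1
     else if ((i : nat) + t)%N == (j + p)%N then eta ^ c else 0).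
Proof.
elim: p => [|p IH] hp.
  apply/matrixP => i j; rewrite !mxE addn0 /= val_eqE.
  have -> : ((i : nat) + t == j)%N = false.
    by apply/negbTE/eqP; move: (ltn_ord j) => /ssrnat.ltP; nlia.
  by case: (i == j).
rewrite mxpowS (IH (ltnW hp)); apply/matrixP => i j; rewrite !mxE.
have hj := ltn_ord j.
case: i => [[|i'] Hi] /=.
  have ht1 : (t.-1 < t)%N by rewrite ltn_predL.
  rewrite (bigD1 (Ordinal ht1)) //= big1 ?addr0; last first.
    move=> l hl; rewrite !mxE /=.
    have -> : ((l : nat) == t.-1) = false.
      by apply/negbTE; move: hl; apply: contra => /eqP h; apply/eqP/val_inj.
    by rewrite mul0r.
  rewrite !mxE /= eqxx /=.
  have -> : (t.-1 + t == j + p)%N = false.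
    by apply/negbTE/eqP; move: (ht0) hj hp => /ssrnat.ltP ? /ssrnat.ltP ? /ssrnat.ltP ?; nlia.
  have -> : (0 + t == j + p.+1)%N = (t.-1 == j + p)%N.
    by apply/eqP/eqP; move: (ht0) => /ssrnat.ltP ?; nlia.
  by rewrite addnS; case: ifP => _; rewrite ?mulr1 ?mulr0.
have Hi' : (i' < t)%N by apply: ltnW.
rewrite (bigD1 (Ordinal Hi')) //= big1 ?addr0; last first.
  move=> l hl; rewrite !mxE /= eqSS.
  have -> : (i' == l) = false.
    by apply/negbTE; move: hl; apply: contra => /eqP h; apply/eqP/val_inj.
  by rewrite mul0r.
rewrite !mxE /= eqxx mul1r addnS eqSS addSn eqSS.
by [].
Qed.

Lemma Bpow_t : mxpow B t = (eta ^ c)%:M.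
Proof.
rewrite Bpow_formula //; apply/matrixP => i j; rewrite !mxE.
have -> : ((i : nat) == j + t)%N = false.
  by apply/negbTE/eqP; move: (ltn_ord i) => /ssrnat.ltP; nlia.
rewrite eqn_add2r val_eqE; by case: (i == j).
Qed.

Lemma B_unit : eta != 0 -> B \in unitmx.
Proof.
move=> eta0; have w0 : eta ^ c != 0 by rewrite expfz_neq0.
have H : B *m ((eta ^ c)^-1 *: mxpow B t.-1) = 1%:M.
  rewrite -scalemxAr -mxpowS prednK // Bpow_t -mul_scalar_mx -scalar_mxM.
  by rewrite mulVf.
by case: (mulmx1_unit H).
Qed.
End Bmat.

Section Apart.
Variables (L : fieldType) (t m : nat) (k : int) (zeta : L).
Hypotheses (hm : (0 < m)%N) (hz : zeta ^+ m = 1)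
  (hkt : (k ^+ t == 1 %[mod m%:Z])%Z) (ht0 : (0 < t)%N).

Lemma zeta_neq0 : zeta != 0.
Proof.
apply/eqP => z0; move: hz; rewrite z0 expr0n gtn_eqF //.
by move/eqP; rewrite eq_sym oner_eq0.
Qed.

Lemma zeta_congr (a b : int) : (a = b %[mod m%:Z])%Z -> zeta ^ a = zeta ^ b.
Proof.
move=> h; have z0 := zeta_neq0.
have E : forall u : int, zeta ^ (u * m%:Z) = 1.
  by move=> u; rewrite mulrC -exprz_exp -exprnP hz exp1rz.
by rewrite (divz_eq a m) (divz_eq b m) h !expfzDr // !E.
Qed.

Lemma kpow_t a : (k ^+ (a + t) = k ^+ a %[mod m%:Z])%Z.
Proof. by rewrite exprD -modzMmr (eqP hkt) modzMmr mulr1. Qed.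

Lemma kpow_mod a : (k ^+ a = k ^+ (a %% t) %[mod m%:Z])%Z.
Proof.
rewrite {1}(divn_eq a t); elim: (a %/ t)%N => [|u IH]; first by rewrite mul0n add0n.
by rewrite mulSnr addnAC kpow_t IH.
Qed.

Definition Ap p : 'M[L]_t := diag_mx (\row_(i < t) zeta ^ (k ^+ (i + p)%N)).

Lemma rep_aE : rep_a t zeta k = Ap 0.
Proof. by apply/matrixP => i j; rewrite !mxE addn0; case: (i == j). Qed.

Lemma Ap_B (eta : L) (c : int) p : Ap p *m rep_b t eta c = rep_b t eta c *m Ap p.+1.
Proof.
rewrite mul_diag_mx mul_mx_diag; apply/matrixP => i j; rewrite !mxE.
case: eqP => [h|_]; first by rewrite h addSnnS mulr1 mul1r.
case: andP => [[/eqP hi /eqP hj]|_]; last by rewrite mulr0 mul0r.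
rewrite hi hj add0n mulrC; congr (_ * _); apply: zeta_congr.
by rewrite addnS -addSn prednK // addnC kpow_t.
Qed.

Lemma Ap_Bpow (eta : L) (c : int) q p :
  Ap p *m mxpow (rep_b t eta c) q = mxpow (rep_b t eta c) q *m Ap (p + q).
Proof.
elim: q p => [|q IH] p; first by rewrite addn0 mulmx1 mul1mx.
by rewrite mxpowS mulmxA Ap_B -mulmxA IH mulmxA addSnnS.
Qed.

Lemma Ap_m : mxpow (Ap 0) m = 1%:M.
Proof.
rewrite mxpow_diag; apply/matrixP => i j; rewrite !mxE.
by rewrite exprnP exprzAC -exprnP hz exp1rz.
Qed.

Lemma mxpowz_A : mxpowz (Ap 0) k = Ap 1.
Proof.
rewrite mxpowz_diag; last by move=> i; rewrite mxE expfz_neq0 // zeta_neq0.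
apply/matrixP => i j; rewrite !mxE.
by rewrite exprz_exp addn0 addn1 exprSr.
Qed.

Lemma map_Ap (f : {rmorphism L -> L}) (q j : nat) :
  (forall x, f x = x ^+ q) -> ((q%:Z) = k ^+ j %[mod m%:Z])%Z ->
  map_mx f (Ap 0) = Ap (j %% t).
Proof.
move=> fE hq; apply/matrixP => i l; rewrite !mxE rmorphMn fE.
congr (_ *+ _); rewrite exprnP exprz_exp; apply: zeta_congr.
rewrite addn0 -modzMmr hq modzMmr -exprD kpow_mod.
by rewrite [in RHS]kpow_mod modnDmr.
Qed.
End Apart.

Lemma shift_sum (V : nmodType) (F : nat -> nat -> V) (t : nat) : (0 < t)%N ->
  F t 1%N = F 0%N t.+1 ->
  \sum_(0 <= l < t) F l.+1 (t - l)%N = \sum_(0 <= l < t) F l (t - l)%N.+1.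
Proof.
case: t => // t _ h.
rewrite big_nat_recr //= big_nat_recl //= subSnn h subn0 addrC; congr (_ + _).
rewrite big_nat_cond [RHS]big_nat_cond; apply: eq_bigr => l /andP[/andP[_ hl] _].
by rewrite subSS subSn // ltnW.
Qed.

Section Descent.
Variables (L : closedFieldType) (f : {rmorphism L -> L}) (q t : nat)
  (M : 'M[L]_t) (beta : L).
Hypotheses (hq1 : (1 < q)%N) (fE : forall x, f x = x ^+ q) (hqc : q%:R = 0 :> L)
  (hM : map_mx f M = M) (hMt : mxpow M t = beta%:M) (hb : beta != 0)
  (ht0 : (0 < t)%N).

Definition uvec (y : L) (i : 'I_t) : 'rV[L]_t :=
  \sum_(0 <= l < t) (y ^+ (q ^ l)) *: row i (mxpow M (t - l)).

Lemma uvec_fixed y i : y ^+ (q ^ t) = beta * y ->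
  map_mx f (uvec y i) = uvec y i *m M.
Proof.
move=> hy; rewrite /uvec raddf_sum /= mulmx_suml.
under eq_bigr => l _ do rewrite map_mxZ map_row map_mxpow hM fE -exprM -expnSr.
under [RHS]eq_bigr => l _ do rewrite -scalemxAl -row_mul -mxpowSr.
apply: (shift_sum (F := fun l e => y ^+ (q ^ l) *: row i (mxpow M e))) => //.
rewrite hy expn0 expr1 [mxpow M t.+1]mxpowSr hMt mul_scalar_mx.
by rewrite mxpowS mulmx1 linearZ /= scalerA mulrC.
Qed.

Lemma roots_exist : exists r : seq L,
  [/\ uniq r, size r = (q ^ t)%N & forall y, y \in r -> y ^+ (q ^ t) = beta * y].
Proof.
set N := (q ^ t)%N.
have N2 : (1 < N)%N by rewrite /N -(expn0 q) ltn_exp2l.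
pose P0 : {poly L} := 'X^N - beta *: 'X.
have sP0 : size P0 = N.+1.
  rewrite size_polyDl ?size_polyXn // size_polyN size_scale // size_polyX ltnS //.
have P0nz : P0 != 0 by rewrite -size_poly_eq0 sP0.
have [r Hr] := closed_field_poly_normal P0.
have lc0 : lead_coef P0 != 0 by rewrite lead_coef_eq0.
have rootE z : root P0 z = (z \in r) by rewrite {1}Hr rootZ // root_prod_XsubC.
have rootE' z : root P0 z = (z ^+ N == beta * z).
  by rewrite /root !hornerE subr_eq0.
exists r; split.
- rewrite -separable_prod_XsubC -(eqp_separable (eqp_scale _ lc0)) -Hr.
  rewrite unlock; apply: Pdiv.ClosedField.root_coprimep => z _.
  rewrite derivB derivXn derivZ derivX !hornerE.
  rewrite hornerMn -mulr_natr /N natrX hqc expr0n (gtn_eqF ht0).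
  by rewrite mulr0 sub0r oppr_eq0.
- apply: succn_inj; rewrite -sP0 {1}Hr size_scale // size_prod_XsubC //.
- by move=> y; rewrite -rootE rootE' => /eqP.
Qed.

Lemma uvec_pair (v : 'rV[L]_t) (y : L) (i : 'I_t) :
  \sum_(c < t) v 0 c * uvec y i 0 c =
  \sum_(0 <= l < t) (\sum_(c < t) row i (mxpow M (t - l)) 0 c * v 0 c) * y ^+ (q ^ l).
Proof.
under eq_bigr => c _ do rewrite /uvec summxE big_distrr.
rewrite exchange_big /=; apply: eq_bigr => l _.
rewrite mulr_suml; apply: eq_bigr => c _.
by rewrite !mxE mulrCA mulrC (mulrC (v 0 c)).
Qed.

Lemma descent_Q : exists Q : 'M[L]_t, Q \in unitmx /\ map_mx f Q = Q *m M.
Proof.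
have [r [ur sr hr]] := roots_exist.
pose I := ('I_t * 'I_(size r))%type.
pose T : 'M[L]_(#|{:I}|, t) :=
  \matrix_(p < #|{:I}|) uvec (r`_(enum_val p).2) (enum_val p).1.
have rowT p : row p T = uvec (r`_(enum_val p).2) (enum_val p).1 by rewrite rowK.
have fixT p : map_mx f (row p T) = row p T *m M.
  by rewrite rowT uvec_fixed // hr // mem_nth.
have rankT : \rank T = t.
  apply/eqP; rewrite eqn_leq rank_leq_col /= leqNgt; apply/negP => hlt.
  set Kx := kermx T^T.
  have Kx0 : Kx != 0.
    by rewrite -mxrank_eq0 mxrank_ker mxrank_tr subn_eq0 -ltnNge.
  have [a ha] : exists a, row a Kx != 0.
    apply/existsP; apply: contraR Kx0 => /existsPn H.
    apply/eqP/row_matrixP => a; rewrite row0; apply/eqP.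
    by move: (H a); rewrite negbK.
  set v := row a Kx in ha.
  have vT : v *m T^T = 0 by apply/sub_kermxP; exact: row_sub.
  have key : forall i, v 0 i = 0.
    move=> i.
    pose gam l := \sum_(c < t) row i (mxpow M (t - l)) 0 c * v 0 c.
    pose P : {poly L} := \sum_(0 <= l < t) gam l *: 'X^(q ^ l).
    have Pval y : P.[y] = \sum_(c < t) v 0 c * uvec y i 0 c.
      rewrite uvec_pair horner_sum; apply: eq_bigr => l _.
      by rewrite hornerZ hornerXn.
    have Proot : all (root P) r.
      apply/allP => y hy; rewrite /root Pval.
      have hn : (index y r < size r)%N by rewrite index_mem.
      pose p := enum_rank ((i, Ordinal hn) : I).
      have h := congr1 (fun X : 'M_(1, _) => X 0 p) vT; rewrite !mxE in h.
      apply/eqP; rewrite -[RHS]h; apply: eq_bigr => c _; rewrite !mxE enum_rankK /=.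
      by rewrite nth_index.
    have P0 : P = 0.
      apply: (roots_geq_poly_eq0 Proot ur); rewrite sr.
      rewrite /P big_seq; apply: (big_ind (fun p : {poly L} => size p <= q ^ t)%N).
      - by rewrite size_poly0.
      - by move=> p1 p2 h1 h2; apply: leq_trans (size_polyD _ _) _; rewrite geq_max h1.
      move=> l; rewrite mem_index_iota => /andP[_ hl].
      apply: leq_trans (size_scale_leq _ _) _; rewrite size_polyXn.
      by rewrite ltn_exp2l.
    have g0 : gam 0%N = 0.
      have := congr1 (fun p : {poly L} => p`_1) P0; rewrite coef0 => <-.
      rewrite coef_sum big_ltn // coefZ coefXn expn0 eqxx mulr1.
      rewrite big_nat_cond big1 ?addr0 // => l /andP[/andP[hl _] _].
      rewrite coefZ coefXn eq_sym gtn_eqF ?mulr0 //.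
      by rewrite -{1}(expn0 q) ltn_exp2l.
    move: g0; rewrite /gam subn0 hMt (bigD1 i) //= big1 ?addr0.
      by rewrite !mxE eqxx mulr1n => /eqP; rewrite mulf_eq0 (negbTE hb) => /eqP.
    by move=> c hc; rewrite !mxE eq_sym (negbTE hc) mulr0n mul0r.
  by move: ha; rewrite (_ : v = 0) ?eqxx //; apply/rowP => i; rewrite key mxE.
have [g ug] : exists g : 'I_t -> 'I_#|{:I}|, rowsub g T \in unitmx.
  have := maxrowsub_free T; move: (maxrankfun T); rewrite rankT => F HF.
  by exists F; rewrite -row_free_unit.
exists (rowsub g T); split => //.
apply/row_matrixP => a; rewrite -map_row row_mul !row_rowsub fixT.
by [].
Qed.
End Descent.

Lemma descent_fixed (L : fieldType) (f : {rmorphism L -> L}) t (Q M X : 'M[L]_t) :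
  Q \in unitmx -> M \in unitmx -> map_mx f Q = Q *m M ->
  X *m M = M *m map_mx f X ->
  map_mx f (Q *m X *m invmx Q) = Q *m X *m invmx Q.
Proof.
move=> uQ uM hQ hX; set C := Q *m X *m invmx Q.
have CQ : C *m Q = Q *m X by rewrite /C mulmxKV.
have E : map_mx f C *m Q *m M = C *m Q *m M.
  rewrite -mulmxA -hQ -map_mxM CQ map_mxM hQ -mulmxA -hX !mulmxA -CQ.
  by [].
have := congr1 (mulmx^~ (invmx M)) E; rewrite !mulmxK // => E2.
by have := congr1 (mulmx^~ (invmx Q)) E2; rewrite !mulmxK.
Qed.

Theorem theorem4p5
  (m n : nat) (k : int) (t r : nat)
  (hm : (1 <= m)%N) (hn : (1 <= n)%N)
  (hkn : (k ^+ n == 1 %[mod m%:Z])%Z)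
  (ht : is_mult_order k m t) (hnrt : n = (r * t)%N)
  (s : nat) (hs : prime s) (hsm : coprime s m)
  (L : closedFieldType) (hchar : s \in [pchar L])
  (halg : forall x : L, exists e : nat, (0 < e)%N /\ x ^+ (s ^ e) = x)
  (zeta : L) (hzeta : m.-primitive_root zeta)
  (q e : nat) (he : (0 < e)%N) (hq : q = (s ^ e)%N)
  (j : nat) (hqk : ((q%:Z) == k ^+ j %[mod m%:Z])%Z)
  (eta : L) (heta_F : in_Fq q eta) (heta : r.-primitive_root eta)
  (c : int) :
  let A := rep_a t zeta k in
  let B := rep_b t eta c in
  [/\ mxpow A m = 1%:M, mxpow B n = 1%:M,
      B \in unitmx, invmx B *m A *m B = mxpowz A k
    & realizable2 q A B].
Proof.
move=> A B.
have [ht0 [hkt _]] := ht.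
have hz : zeta ^+ m = 1 := prim_expr_order hzeta.
have hr0 : (0 < r)%N.
  by move: hn; rewrite hnrt muln_gt0 => /andP[].
have heta1 : eta ^+ r = 1 := prim_expr_order heta.
have eta0 : eta != 0.
  apply/eqP => z0; move: heta1; rewrite z0 expr0n gtn_eqF //.
  by move/eqP; rewrite eq_sym oner_eq0.
have w0 : eta ^ c != 0 by rewrite expfz_neq0.
have uB : B \in unitmx := B_unit ht0 c eta0.
have AE : A = Ap t k zeta 0 := rep_aE t k zeta.
split.
- by rewrite AE (Ap_m t k hz).
- rewrite hnrt mulnC mxpowM (Bpow_t ht0) mxpow_scalar.
  by rewrite exprnP exprzAC -exprnP heta1 exp1rz.
- exact: uB.
- by rewrite AE (mxpowz_A t k hm hz) -mulmxA (Ap_B hm hz hkt ht0) mulKmx.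
pose f : {rmorphism L -> L} := frq hchar e.
have fE x : f x = x ^+ q by rewrite hq.
have hq1 : (1 < q)%N by rewrite hq -(expn0 s) ltn_exp2l ?prime_gt1.
have hqc : q%:R = 0 :> L by rewrite hq natrX (pcharf0 hchar) expr0n gtn_eqF.
set j' := (j %% t)%N.
pose M := mxpow B j'.
have fB : map_mx f B = B.
  apply/matrixP => a b; rewrite !mxE.
  case: ifP => _; first exact: rmorph1.
  case: ifP => _; last exact: rmorph0.
  by rewrite fE exprnP exprzAC -exprnP (eqP heta_F).
have hM : map_mx f M = M by rewrite /M map_mxpow fB.
have hMt : mxpow M t = ((eta ^ c) ^+ j')%:M.
  by rewrite /M -mxpowM mulnC mxpowM (Bpow_t ht0) mxpow_scalar.
have hb : (eta ^ c) ^+ j' != 0 by rewrite expf_neq0.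
have [Q [uQ hQ]] := descent_Q hq1 fE hqc hM hMt hb ht0.
have uM : M \in unitmx by apply: mxpow_unit.
exists (invmx Q); split; first by rewrite unitmx_inv.
split.
- move=> a b; rewrite invmxK.
  have hA : A *m M = M *m map_mx f A.
    rewrite AE (map_Ap hm hz hkt fE (eqP hqk)).
    by rewrite /M (Ap_Bpow hm hz hkt ht0) add0n.
  have := congr1 (fun X : 'M[L]_t => X a b) (descent_fixed uQ uM hQ hA).
  by rewrite mxE fE /in_Fq => ->.
- move=> a b; rewrite invmxK.
  have hBM : B *m M = M *m map_mx f B by rewrite fB /M mxpow_comm.
  have := congr1 (fun X : 'M[L]_t => X a b) (descent_fixed uQ uM hQ hBM).
  by rewrite mxE fE /in_Fq => ->.
Qed.
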